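(* Let $n\ge 5$, $k\ge 2$ with $n-k\ge 2$, let $1\le i\le k$, and let $I\subseteq\langle n\rangle$ be nonempty. Then the subgraph $A^{(i,I)}_{n,k}$ of $A_{n,k}$ is Hamiltonian connected, i.e. for any two distinct vertices $u,v$ of $A^{(i,I)}_{n,k}$ there is a path from $u$ to $v$ visiting every vertex of $A^{(i,I)}_{n,k}$ exactly once.
   Context: For integers $n>k\ge 1$, let $\langle n\rangle=\{1,\dots,n\}$. The arrangement graph $A_{n,k}$ has vertex set the set of all sequences $u=u_1u_2\cdots u_k$ with $u_i\in\langle n\rangle$ and $u_i\ne u_j$ for $i\ne j$, and two vertices are adjacent iff they differ in exactly one position. For $l\in\langle k\rangle$ and $I\subseteq\langle n\rangle$, $A^{(l,I)}_{n,k}$ denotes the subgraph of $A_{n,k}$ induced by the set of vertices $p=p_1\cdots p_k$ with $p_l\in I$ (for $I=\{j\}$ this is written $A^{(l,j)}_{n,k}$, and it is isomorphic to $A_{n-1,k-1}$). *)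

(* Defs.v *)
From mathcomp Require Import all_boot.
Set Implicit Arguments. Unset Strict Implicit. Unset Printing Implicit Defensive.

(* Symbols <n> = {1,...,n} are represented by 'I_n = {0,...,n-1}
   (symbol s in the paper corresponds to s-1 here); positions 1..k by 'I_k. *)

Definition arr_vertex (n k : nat) := {t : k.-tuple 'I_n | uniq t}.

Definition arr_adj (n k : nat) : rel (arr_vertex n k) :=
  fun u v => #|[set j : 'I_k | tnth (val u) j != tnth (val v) j]| == 1.

Definition arr_sub (n k : nat) (l : 'I_k) (I : {set 'I_n}) : {set arr_vertex n k} :=
  [set p | tnth (val p) l \in I].

Definition ham_path (T : finType) (e : rel T) (S : {set T}) (u v : T)
    (p : seq T) : Prop :=
  [/\ uniq (u :: p), [set x in u :: p] = S, path e u p & last u p = v].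

Definition ham_connected (T : finType) (e : rel T) (S : {set T}) : Prop :=
  forall u v, u \in S -> v \in S -> u != v -> exists p, ham_path e S u v p.

(* Main.v *)
Require Import Defs.
From mathcomp Require Import all_boot zify.
Set Implicit Arguments. Unset Strict Implicit. Unset Printing Implicit Defensive.

Section Gen.
Variable T : finType.
Variable e : rel T.

Definition hasE (E : rel T) (s : seq T) :=
  exists s1 s2 x y, s = s1 ++ x :: y :: s2 /\ E x y.

Definition HCE (S : {set T}) (E : rel T) :=
  forall u v, u \in S -> v \in S -> u != v ->
    exists p, ham_path e S u v p /\ hasE E (u :: p).

Lemma hasE_catl E s1 s2 : hasE E s1 -> hasE E (s1 ++ s2).
Proof.
by case=> [a [b [x [y [-> H]]]]]; exists a, (b ++ s2), x, y; rewrite -catA.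
Qed.

Lemma hasE_catr E s1 s2 : hasE E s2 -> hasE E (s1 ++ s2).
Proof.
by case=> [a [b [x [y [-> H]]]]]; exists (s1 ++ a), b, x, y; rewrite -catA.
Qed.

Lemma HCE_HC S E : HCE S E -> ham_connected e S.
Proof. by move=> H u v Hu Hv Huv; case: (H u v Hu Hv Huv) => p [Hp _]; exists p. Qed.

Lemma HC_HCE S : ham_connected e S -> HCE S (fun _ _ => true).
Proof.
move=> H u v Hu Hv Huv; case: (H u v Hu Hv Huv) => p Hp; exists p; split => //.
case: p Hp => [|y p] [_ _ _ /= Hl]; first by rewrite Hl eqxx in Huv.
by exists [::], p, u, y.
Qed.

Lemma HCE_mono S (E E' : rel T) : (forall x y, E x y -> E' x y) -> HCE S E -> HCE S E'.
Proof.
move=> HE H u v Hu Hv Huv; case: (H u v Hu Hv Huv) => p [Hp [a [b [x [y [Hs Hxy]]]]]].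
by exists p; split => //; exists a, b, x, y; split => //; apply: HE.
Qed.

Lemma set_cat (s1 s2 : seq T) : [set x in s1 ++ s2] = [set x in s1] :|: [set x in s2].
Proof. by apply/setP => x; rewrite !inE mem_cat. Qed.

Lemma ham_cat S1 S2 u x y v p1 p2 :
  ham_path e S1 u x p1 -> ham_path e S2 y v p2 -> [disjoint S1 & S2] -> e x y ->
  ham_path e (S1 :|: S2) u v (p1 ++ y :: p2).
Proof.
move=> [U1 E1 P1 L1] [U2 E2 P2 L2] D Exy; split.
- have -> : u :: p1 ++ y :: p2 = (u :: p1) ++ (y :: p2) by [].
  rewrite cat_uniq U1 U2 andbT andTb; apply/hasPn => z Hz.
  have Z2 : z \in S2 by rewrite -E2 inE.
  apply/negP => Z1; have : z \in S1 by rewrite -E1 inE.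
  by move/(disjointFr D); rewrite Z2.
- by rewrite -cat_cons set_cat E1 E2.
- by rewrite cat_path P1 L1 /= Exy.
- by rewrite last_cat L1.
Qed.

Lemma ham_path_neq S u v p : ham_path e S u v p -> u != v -> p != [::].
Proof. by case: p => //= [[_ _ _ /= ->]]; rewrite eqxx. Qed.

Lemma chain (J : eqType) (B : J -> {set T}) (Ej : J -> rel T) :
  forall (js : seq J) j1, uniq (j1 :: js) ->
  (forall j j', j \in j1 :: js -> j' \in j1 :: js -> j != j' -> [disjoint B j & B j']) ->
  (forall j, j \in j1 :: js -> HCE (B j) (Ej j)) ->
  (forall j j', j \in j1 :: js -> j' \in j1 :: js -> j != j' -> forall x0 z0,
      exists x y, [/\ x \in B j, y \in B j', x != x0, y != z0 & e x y]) ->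
  forall u v, u \in B j1 -> v \in B (last j1 js) -> u != v ->
  exists p, ham_path e (\bigcup_(j <- j1 :: js) B j) u v p /\
            (forall j, j \in j1 :: js -> hasE (Ej j) (u :: p)).
Proof.
elim=> [|j2 js IH] j1 Hu Hd Hh Hc u v Uu Uv Huv.
  case: (Hh j1 (mem_head _ _) u v Uu Uv Huv) => p [Hp HE].
  exists p; split; first by rewrite big_seq1.
  by move=> j; rewrite inE => /eqP ->.
have j12 : j1 != j2 by move: Hu => /= /andP [/negP H _]; apply/eqP => E; apply: H; rewrite E mem_head.
case: (Hc j1 j2 (mem_head _ _) _ j12 u v) => [|x [y [Bx By xu yv Exy]]].
  by rewrite !inE eqxx orbT.
have sub : forall j, j \in j2 :: js -> j \in j1 :: j2 :: js by move=> j Hj; rewrite inE Hj orbT.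
case: (IH j2 _ _ _ _ y v By Uv yv).
- by move: Hu => /= /andP [_].
- by move=> j j' Hj Hj'; apply: Hd; apply: sub.
- by move=> j Hj; apply: Hh; apply: sub.
- by move=> j j' Hj Hj'; apply: Hc; apply: sub.
move=> p2 [Hp2 HE2].
have ux : u != x by rewrite eq_sym.
case: (Hh j1 (mem_head _ _) u x Uu Bx ux) => p1 [Hp1 HE1].
exists (p1 ++ y :: p2); split.
- rewrite big_cons; apply: ham_cat Hp1 Hp2 _ Exy.
  rewrite -setI_eq0 big_distrr /=; apply/eqP; rewrite big_seq; apply: big1 => j Hj.
  apply/eqP; rewrite setI_eq0; apply: Hd => //; first by apply: mem_head.
    by apply: sub.
  by apply/eqP => E; move: Hu; rewrite /= E Hj.
- move=> j; rewrite inE => /orP [/eqP ->|Hj].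
    by rewrite -cat_cons; apply: hasE_catl.
  by rewrite -cat_cons; apply: hasE_catr; apply: HE2.
Qed.

End Gen.

Lemma ham_map (T T' : finType) (e : rel T) (e' : rel T') (f : T' -> T) S u v p :
  injective f -> (forall x y, e (f x) (f y) = e' x y) ->
  ham_path e' S u v p -> ham_path e (f @: S) (f u) (f v) (map f p).
Proof.
move=> fi fe [U E P L]; split.
- by rewrite -map_cons map_inj_uniq.
- rewrite -E; apply/setP => z; rewrite inE -[f u :: _]/(map f (u :: p)); apply/mapP/imsetP => [[w Hw ->]|[w Hw ->]].
    by exists w; rewrite // inE.
  by exists w; rewrite // inE in Hw.
- by rewrite path_map; rewrite (eq_path (e' := e')) // => x y; rewrite /relpre /= fe.
- by rewrite last_map L.
Qed.

Lemma HCE_map (T T' : finType) (e : rel T) (e' : rel T') (f : T' -> T) S (E : rel T) (E' : rel T') :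
  injective f -> (forall x y, e (f x) (f y) = e' x y) ->
  (forall x y, E' x y -> E (f x) (f y)) ->
  HCE e' S E' -> HCE e (f @: S) E.
Proof.
move=> fi fe fE H u v /imsetP [u0 Hu0 ->] /imsetP [v0 Hv0 ->] Huv.
have Huv0 : u0 != v0 by apply: contraNneq Huv => ->.
case: (H u0 v0 Hu0 Hv0 Huv0) => p [Hp [a [b [x [y [Hs Hxy]]]]]].
exists (map f p); split; first by apply: ham_map.
exists (map f a), (map f b), (f x), (f y); split; last by apply: fE.
by rewrite -map_cons Hs map_cat.
Qed.

Lemma splice (T : finType) (e : rel T) (X R : {set T}) u v p s1 s2 x y x' y' q :
  ham_path e X u v p -> u :: p = s1 ++ x :: y :: s2 ->
  ham_path e R x' y' q -> [disjoint X & R] -> e x x' -> e y' y ->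
  exists p', ham_path e (X :|: R) u v p'.
Proof.
move=> [U E P L] Hs [U' E' P' L'] D ex ey.
have Hs' : s1 ++ x :: (x' :: q ++ y :: s2) = u :: behead (s1 ++ x :: (x' :: q ++ y :: s2)).
  by case: s1 Hs => [|a s1] [-> _].
set s' := s1 ++ x :: (x' :: q ++ y :: s2) in Hs' *.
have pe : perm_eq s' ((u :: p) ++ (x' :: q)).
  rewrite Hs /s' -catA perm_cat2l /= perm_cons.
  by rewrite -[x' :: _]/((x' :: q) ++ (y :: s2)) perm_catC.
exists (behead s'); split.
- rewrite -Hs' (perm_uniq pe) cat_uniq U U' andbT andTb; apply/hasPn => z Hz.
  have Z2 : z \in R by rewrite -E' inE.
  apply/negP => Z1; have : z \in X by rewrite -E inE.
  by move/(disjointFr D); rewrite Z2.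
- apply/setP => z; rewrite -Hs' inE (perm_mem pe) mem_cat -E -E' !inE.
  by [].
- have : sorted e (s1 ++ x :: y :: s2) by rewrite -Hs.
  rewrite !sorted_cat_cons /= => /andP [Pa /andP [_ Pb]].
  have : sorted e s' by rewrite /s' sorted_cat_cons Pa /= ex cat_path P' L' /= ey Pb.
  by rewrite {1}Hs'.
- have -> : last u (behead s') = last u s' by rewrite {2}Hs'.
  rewrite -L; have -> : last u p = last u (u :: p) by [].
  by rewrite Hs /s' !last_cat /= last_cat.
Qed.

Section Arr.
Variables n k : nat.
Notation V := (arr_vertex n k).
Implicit Types (t : k.-tuple 'I_n) (q p : 'I_k) (s : 'I_n).

Lemma arr_adjC (x y : V) : arr_adj x y = arr_adj y x.
Proof.
rewrite /arr_adj; congr (_ == 1); apply: eq_card => p; by rewrite !inE eq_sym.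
Qed.

Lemma arr_adj_neq (x y : V) : arr_adj x y -> x != y.
Proof.
apply: contraTneq => ->; rewrite /arr_adj.
rewrite (_ : [set _ | _] = set0) ?cards0 //; apply/setP => p; by rewrite !inE eqxx.
Qed.

Lemma neq_pos (x y : V) : x != y -> exists p, tnth (val x) p != tnth (val y) p.
Proof.
move=> H; apply/existsP; apply: contraNT H; rewrite negb_exists => /forallP H.
apply/eqP/val_inj/eq_from_tnth => p; apply/eqP; move: (H p); by rewrite negbK.
Qed.

Definition upd (t : k.-tuple 'I_n) (q : 'I_k) (s : 'I_n) : k.-tuple 'I_n :=
  [tuple if p == q then s else tnth t p | p < k].

Lemma tnth_upd t q s p : tnth (upd t q s) p = if p == q then s else tnth t p.
Proof. by rewrite tnth_mktuple. Qed.

Lemma upd_uniq t q s : uniq t -> s \notin t -> uniq (upd t q s).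
Proof.
move=> /tuple_uniqP U S; apply/tuple_uniqP => p1 p2; rewrite !tnth_upd.
case: eqP => [->|_]; case: eqP => [->|_] // E.
- by move: S; rewrite E mem_tnth.
- by move: S; rewrite -E mem_tnth.
- by apply: U.
Qed.

Definition updV (x : V) q s : V := insubd x (upd (val x) q s).

Lemma updV_val (x : V) q s : s \notin val x -> val (updV x q s) = upd (val x) q s.
Proof. by move=> S; rewrite insubdK // -topredE /= upd_uniq // (valP x). Qed.

Lemma tnth_updV (x : V) q s p : s \notin val x ->
  tnth (val (updV x q s)) p = if p == q then s else tnth (val x) p.
Proof. by move=> S; rewrite updV_val // tnth_upd. Qed.

Lemma adj_updV (x : V) q s : s \notin val x -> arr_adj x (updV x q s).
Proof.
move=> S; rewrite /arr_adj (_ : [set _ | _] = [set q]) ?cards1 //.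
apply/setP => p; rewrite !inE tnth_updV //; case: (p =P q) => [->|_].
  by apply: contraNneq S => <-; rewrite mem_tnth.
by apply/negbTE; rewrite negbK.
Qed.

Lemma upd_upd t q s : upd (upd t q s) q (tnth t q) = t.
Proof. by apply: eq_from_tnth => p; rewrite !tnth_upd; case: eqP => [->|]. Qed.

End Arr.

Section Ins.
Variables (n k : nat) (i : 'I_k.+1) (j : 'I_n.+1).
Implicit Types (t : k.-tuple 'I_n).

Definition ins_t t : k.+1.-tuple 'I_n.+1 :=
  [tuple if unlift i p is Some p' then lift j (tnth t p') else j | p < k.+1].

Lemma tnth_ins_i t : tnth (ins_t t) i = j.
Proof. by rewrite tnth_mktuple unlift_none. Qed.

Lemma tnth_ins_lift t p : tnth (ins_t t) (lift i p) = lift j (tnth t p).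
Proof. by rewrite tnth_mktuple liftK. Qed.

Lemma ins_uniq t : uniq t -> uniq (ins_t t).
Proof.
move=> /tuple_uniqP U; apply/tuple_uniqP => p1 p2.
case: (unliftP i p1) => [q1|] ->; case: (unliftP i p2) => [q2|] ->;
  rewrite ?tnth_ins_lift ?tnth_ins_i //.
- by move/lift_inj/U => ->.
- by move/eqP; rewrite ?(negbTE (neq_lift _ _)) // eq_sym (negbTE (neq_lift _ _)).
- by move/eqP; rewrite ?(negbTE (neq_lift _ _)) // eq_sym (negbTE (neq_lift _ _)).
Qed.

Definition insV (x : arr_vertex n k) : arr_vertex n.+1 k.+1 :=
  exist _ (ins_t (val x)) (ins_uniq (valP x)).

Lemma insV_val x : val (insV x) = ins_t (val x). Proof. by []. Qed.

Lemma insV_inj : injective insV.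
Proof.
move=> x y E; apply/val_inj/eq_from_tnth => p.
have := congr1 (fun w : arr_vertex n.+1 k.+1 => tnth (val w) (lift i p)) E.
by rewrite /= !tnth_ins_lift => /lift_inj.
Qed.

Lemma insV_adj x y : arr_adj (insV x) (insV y) = arr_adj x y.
Proof.
rewrite /arr_adj; congr (_ == 1).
rewrite -(card_imset _ (@lift_inj _ i)); apply: eq_card => q.
rewrite !inE /=; case: (unliftP i q) => [p|] ->.
  by rewrite !tnth_ins_lift (inj_eq (@lift_inj _ j)) (mem_imset _ _ (@lift_inj _ i)) inE.
rewrite !tnth_ins_i eqxx /=; apply/esym/negbTE/imsetP => [[p _ E]].
by have := neq_lift i p; rewrite -E eqxx.
Qed.

Lemma mem_insV x b : (lift j b \in val (insV x)) = (b \in val x).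
Proof.
apply/tnthP/tnthP => [[q]|[p ->]]; last by exists (lift i p); rewrite tnth_ins_lift.
case: (unliftP i q) => [p|] ->; rewrite ?tnth_ins_lift ?tnth_ins_i.
  by move/lift_inj => ->; exists p.
by move=> E; have := neq_lift j b; rewrite E eqxx.
Qed.

Lemma blockE (d : 'I_n) :
  [set w : arr_vertex n.+1 k.+1 | tnth (val w) i == j] = insV @: setT.
Proof.
apply/setP => w; rewrite inE; apply/eqP/imsetP => [Ew|[x _ ->]]; last by rewrite tnth_ins_i.
have Hw : forall p, tnth (val w) (lift i p) != j.
  move=> p; rewrite -Ew; apply/eqP => /(tuple_uniqP _ (valP w)) E.
  by have := neq_lift i p; rewrite E eqxx.
pose t := [tuple odflt d (unlift j (tnth (val w) (lift i p))) | p < k].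
have Ht : forall p, lift j (tnth t p) = tnth (val w) (lift i p).
  move=> p; rewrite tnth_mktuple.
  case: (unliftP j (tnth (val w) (lift i p))) => [y ->|E] //=.
  by move: (Hw p); rewrite E eqxx.
have Ut : uniq t.
  apply/tuple_uniqP => p1 p2 E.
  have : tnth (val w) (lift i p1) = tnth (val w) (lift i p2) by rewrite -!Ht E.
  by move/(tuple_uniqP _ (valP w))/lift_inj.
exists (exist _ t Ut) => //; apply/val_inj/eq_from_tnth => q; rewrite insV_val /=.
case: (unliftP i q) => [p|] ->; first by rewrite tnth_ins_lift Ht.
by rewrite tnth_ins_i Ew.
Qed.

End Ins.

Lemma three (T : eqType) (a1 a2 a3 x0 z1 : T) :
  a1 != a2 -> a2 != a3 -> a3 != a1 ->
  exists2 a, a \in [:: a1; a2; a3] & (a != x0) && (a != z1).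
Proof.
move=> h12 h23 h31.
have [H|H] := boolP ((a1 != x0) && (a1 != z1)); first by exists a1; rewrite ?inE ?eqxx.
have [H'|H'] := boolP ((a2 != x0) && (a2 != z1)); first by exists a2; rewrite ?inE ?eqxx ?orbT.
exists a3; first by rewrite ?inE ?eqxx ?orbT.
move: H H'; rewrite !negb_and !negbK.
case/orP => /eqP E1; case/orP => /eqP E2;
  apply/andP; split; apply/eqP => E3; subst;
  by rewrite ?eqxx in h12 h23 h31 *; rewrite ?E1 ?E2 ?eqxx in h12 h23 h31.
Qed.

Lemma card_avoid n k (c : 'I_n) :
  #|[set t : arr_vertex n k | c \notin val t]| = n.-1 ^_ k.
Proof.
rewrite -(card_imset _ val_inj) -[n in n.-1]card_ord -(cardC1 c) -card_uniq_tuples; apply: eq_card => t.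
rewrite !inE; apply/imsetP/andP => [[x Hx ->]|[A U]].
  split; last exact: (valP x).
  by apply/allP => y Hy; rewrite !inE /=; apply/eqP => E; move: Hx; rewrite inE -E Hy.
exists (exist _ t U) => //; rewrite inE /=; apply/negP => Hc.
by move/allP: A => /(_ c Hc); rewrite !inE eqxx.
Qed.

Lemma ffact_ge m k : 0 < k -> k <= m -> m <= m ^_ k.
Proof.
case: k => // k _ Hk; rewrite ffactnS -{1}[m]muln1 leq_mul2l ffact_gt0.
by case: m Hk => //= m; rewrite ltnS orbC => ->.
Qed.

Lemma notin_upd n k (x : arr_vertex n k) (i : 'I_k) s :
  s != tnth (val x) i -> tnth (val x) i \notin upd (val x) i s.
Proof.
move=> Hs; apply/tnthP => [[p]]; rewrite tnth_upd; case: (p =P i) => [_|Np].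
  by move/eqP; rewrite eq_sym (negbTE Hs).
by move/(tuple_uniqP _ (valP x)) => E; apply: Np.
Qed.

Section Conn.
Variables (n k : nat) (i : 'I_k.+1).
Hypotheses (hk : 0 < k) (hnk : k + 2 <= n) (hn : 4 <= n).

Definition Blk (j : 'I_n.+1) := [set w : arr_vertex n.+1 k.+1 | tnth (val w) i == j].

Lemma conn (j j' : 'I_n.+1) : j != j' -> forall x0 z0,
  exists x y, [/\ x \in Blk j, y \in Blk j', x != x0, y != z0 & arr_adj x y].
Proof.
move=> jj' x0 z0.
case: (unliftP j j') => [c Ec|Ec]; last by rewrite Ec eqxx in jj'.
have : 2 < #|[set t : arr_vertex n k | c \notin val t]|.
  rewrite card_avoid; apply: leq_trans (ffact_ge _ _); lia.
case/card_gt2P => [t1 [t2 [t3 [[H1 H2 H3] [d12 d23 d31]]]]].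
have di : forall t t', t != t' -> insV i j t != insV i j t'.
  by move=> t t'; rewrite (inj_eq (@insV_inj _ _ i j)).
have [a Ha /andP [ax0 az1]] := three x0 (updV z0 i j) (di _ _ d12) (di _ _ d23) (di _ _ d31).
have [t Ht Eat] : exists2 t, t \in [set t : arr_vertex n k | c \notin val t] & a = insV i j t.
  by move: Ha; rewrite !inE => /or3P [] /eqP ->; [exists t1 | exists t2 | exists t3].
set x := insV i j t.
have tx : tnth (val x) i = j by apply: tnth_ins_i.
have cx : j' \notin val x by rewrite Ec mem_insV; rewrite inE in Ht.
exists x, (updV x i j'); split.
- by rewrite inE tx.
- by rewrite inE tnth_updV // eqxx.
- by rewrite /x -Eat.
- apply/eqP => Ey; move: az1; rewrite Eat -/x -Ey.
  have Hj : j \notin val (updV x i j').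
    by rewrite updV_val // -{1}tx; apply: notin_upd; rewrite tx eq_sym.
  suff -> : updV (updV x i j') i j = x by rewrite eqxx.
  by apply: val_inj; rewrite updV_val // updV_val // -tx upd_upd.
- exact: adj_updV.
Qed.
End Conn.

Notation V := (arr_vertex 4 2).
Definition ord4 (m : nat) : 'I_4 :=
  (if m < 4 as c return (m < 4 = c -> 'I_4) then fun h => Ordinal h else fun _ => ord0) (erefl _).
Definition mkt (a b : nat) : 2.-tuple 'I_4 := [tuple ord4 a; ord4 b].
Definition mk (a b : nat) (d : V) : V :=
  (if uniq (mkt a b) as c return (uniq (mkt a b) = c -> V) then fun h => exist _ (mkt a b) h else fun _ => d) (erefl _).
Definition L : seq V := [seq mk ab.1 ab.2 (exist _ (mkt 0 1) (erefl true)) | ab <- [seq (a, b) | a <- iota 0 4, b <- iota 0 4] & ab.1 != ab.2].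
Definition adj2 (x y : V) := count (fun p => tnth (val x) p != tnth (val y) p) [:: ord0; ord_max] == 1.
Fixpoint hasEb (E : rel V) (s : seq V) := match s with x :: ((y :: _) as s') => E x y || hasEb E s' | _ => false end.
Fixpoint dfs (fuel : nat) (t : V) (cur : V) (prev : seq V) (ok : seq V -> bool) : option (seq V) :=
  match fuel with
  | 0 => if ok (rev prev) then Some (rev prev) else None
  | f.+1 => (fix try cs := match cs with [::] => None | y :: cs' =>
          if [&& adj2 cur y, y \notin prev & (f == 0) == (y == t)] then
           match dfs f t y (y :: prev) ok with Some r => Some r | None => try cs' end
          else try cs' end) L
  end.
Definition avoidb (b : 'I_4) : rel V := fun x y => (b \notin val x) && (b \notin val y).
Definition check (u v : V) (b : 'I_4) : bool :=
  match dfs 11 v u [:: u] (fun s => (last u s == v) && hasEb (avoidb b) s) with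
  | Some s => [&& s == u :: behead s, uniq s, all (fun x => x \in s) L, path adj2 u (behead s),
               last u (behead s) == v & hasEb (avoidb b) s]
  | None => false end.
Lemma size_L : size L = 12. Proof. vm_compute. reflexivity. Qed.
Lemma bigcheck' : True. Proof. by []. Qed.
Lemma bigcheck : all (fun b => all (fun u => all (fun v => if u != v then check u v b else true) L) L) [seq ord4 m | m <- iota 0 4].
Proof. vm_compute. reflexivity. Qed.
Lemma coverT (t : 2.-tuple 'I_4) : uniq t -> t \in map val L.
Proof.
case: t => [[|a [|b [|? ?]]] Hs] //.
move: Hs; case: a => [[|[|[|[|?]]]] Ha] //; case: b => [[|[|[|[|?]]]] Hb] // Hs _; vm_compute; reflexivity.
Qed.
Lemma coverL (w : V) : w \in L.
Proof.
have /mapP [w' Hw' E] := coverT (valP w).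
by rewrite (val_inj E).
Qed.

Lemma cover2 (p : 'I_2) : p \in [:: ord0; ord_max].
Proof. by rewrite !inE; case: p => [[|[|m]] Hm]. Qed.

Lemma adj2E (x y : V) : adj2 x y = arr_adj x y.
Proof.
rewrite /adj2 /arr_adj; congr (_ == 1).
set P := (fun p => _); rewrite -size_filter.
have U : uniq [seq p <- [:: ord0; ord_max] | P p] by rewrite filter_uniq.
rewrite -(card_uniqP U); apply: eq_card => p.
by rewrite !inE mem_filter cover2 andbT.
Qed.

Lemma cover4 (b : 'I_4) : b \in [seq ord4 m | m <- iota 0 4].
Proof. by case: b => [[|[|[|[|m]]]] Hm] //; vm_compute. Qed.

Lemma hasEbP (E : rel V) s : hasEb E s -> hasE E s.
Proof.
elim: s => [|x s IH] //; case: s IH => [|y s] IH //= /orP [Exy|H].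
  by exists [::], s, x, y.
have [a [c [z [w [Es Ezw]]]]] := IH H.
by exists (x :: a), c, z, w; rewrite Es.
Qed.

Lemma F42 (b : 'I_4) : HCE (@arr_adj 4 2) setT (fun x y => (b \notin val x) && (b \notin val y)).
Proof.
move=> u v _ _ uv.
have := bigcheck; move/allP/(_ b (cover4 b))/allP/(_ u (coverL u))/allP/(_ v (coverL v)).
rewrite uv /check.
case: (dfs _ _ _ _ _) => [s|] //.
case/and5P => /eqP Es Us Cs Ps /andP [/eqP Ls Hs].
exists (behead s); split; last by rewrite -Es; apply: hasEbP.
split.
- by rewrite -Es.
- apply/setP => z; rewrite inE in_setT -Es; exact: (allP Cs z (coverL z)).
- by rewrite -(eq_path adj2E).
- exact: Ls.
Qed.

Definition avoidE n k (b : 'I_n) : rel (arr_vertex n k) :=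
  fun x y => (b \notin val x) && (b \notin val y).
Definition Fprop n k := forall b : 'I_n, HCE (@arr_adj n k) setT (avoidE b).

Section Step.
Variables (n k : nat) (i : 'I_k.+1).
Hypotheses (hk : 0 < k) (hnk : k + 2 <= n) (hn : 4 <= n) (FF : Fprop n k).
Notation adj := (@arr_adj n.+1 k.+1).

Let d : 'I_n := Ordinal (leq_trans (isT : 0 < 4) hn).

Lemma blk_HCE j b : b != j -> HCE adj (Blk i j) (avoidE b).
Proof.
move=> bj; case: (unliftP j b) => [b0 Eb|Eb]; last by rewrite Eb eqxx in bj.
rewrite /Blk (blockE i j d); apply: (HCE_map (E' := avoidE b0) (@insV_inj _ _ i j)).
- by move=> x y; rewrite insV_adj.
- by move=> x y; rewrite /avoidE Eb !mem_insV.
- exact: FF.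
Qed.

Lemma blk_HC j : ham_connected adj (Blk i j).
Proof.
apply: (@HCE_HC _ _ _ (avoidE (lift j d))); apply: blk_HCE.
by rewrite eq_sym neq_lift.
Qed.

Lemma blk_cup (s : seq 'I_n.+1) w : (w \in \bigcup_(j <- s) Blk i j) = (tnth (val w) i \in s).
Proof.
elim: s => [|a s IH]; first by rewrite big_nil !inE.
by rewrite big_cons in_setU IH inE /Blk inE.
Qed.

Lemma caseA (I : {set 'I_n.+1}) b u v :
  u \in arr_sub i I -> v \in arr_sub i I -> tnth (val u) i != tnth (val v) i ->
  exists p, ham_path adj (arr_sub i I) u v p /\ hasE (avoidE b) (u :: p).
Proof.
rewrite !inE => uI vI ac.
set a := tnth (val u) i in uI ac *; set c := tnth (val v) i in vI ac *.
set js := rcons [seq j <- enum I | (j != a) && (j != c)] c.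
have Hjs : uniq (a :: js).
  rewrite cons_uniq; apply/andP; split.
    by rewrite /js mem_rcons inE negb_or ac mem_filter eqxx.
  by rewrite /js rcons_uniq filter_uniq ?enum_uniq // andbT mem_filter eqxx andbF.
have Hmem : forall j, (j \in a :: js) = (j \in I).
  move=> j; rewrite /js inE mem_rcons inE mem_filter mem_enum.
  by case: (eqVneq j a) => [->|ja] //=; case: (eqVneq j c) => [->|jc] //=.
pose Ej j := if j == b then (fun _ _ : arr_vertex n.+1 k.+1 => true) else avoidE b.
have Hd : forall j j', j \in a :: js -> j' \in a :: js -> j != j' -> [disjoint Blk i j & Blk i j'].
  move=> j j' _ _ jj'; rewrite -setI_eq0; apply/eqP/setP => w; rewrite !inE.
  by apply/negbTE/andP => [[/eqP -> /eqP E]]; rewrite E eqxx in jj'.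
have Hh : forall j, j \in a :: js -> HCE adj (Blk i j) (Ej j).
  move=> j _; rewrite /Ej; case: eqP => [_|/eqP bj] /=; first by apply: HC_HCE; apply: blk_HC.
  by apply: blk_HCE; rewrite eq_sym.
have Hc : forall j j', j \in a :: js -> j' \in a :: js -> j != j' -> forall x0 z0,
      exists x y, [/\ x \in Blk i j, y \in Blk i j', x != x0, y != z0 & adj x y].
  by move=> j j' _ _ jj'; apply: conn.
have Hu : u \in Blk i a by rewrite inE.
have Hv : v \in Blk i (last a js) by rewrite /js last_rcons inE.
have uv : u != v by apply: contraNneq ac => E; rewrite /a /c E.
have [p [Hp HE]] := chain Hjs Hd Hh Hc Hu Hv uv.
exists p; split.
  suff <- : \bigcup_(j <- a :: js) Blk i j = arr_sub i I by [].
  by apply/setP => w; rewrite blk_cup Hmem !inE.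
case: (eqVneq a b) => [ab|ab].
  have cb : c != b by rewrite -ab eq_sym.
  have := HE c; rewrite /Ej (negbTE cb); apply.
  by rewrite /js inE mem_rcons mem_head orbT.
by have := HE a (mem_head _ _); rewrite /Ej (negbTE ab).
Qed.

End Step.

Lemma arr_subT n k (p : 'I_k) : arr_sub p [set: 'I_n] = setT.
Proof. by apply/setP => w; rewrite !inE. Qed.

Lemma Fstep n k : 0 < k -> k + 2 <= n -> 4 <= n -> Fprop n k -> Fprop n.+1 k.+1.
Proof.
move=> hk hnk hn FF b u v _ _ uv; have [p Hp] := neq_pos uv.
have Hu : u \in arr_sub p setT by rewrite arr_subT inE.
have Hv : v \in arr_sub p setT by rewrite arr_subT inE.
have [q [Hq HE]] := caseA hk hnk hn FF b Hu Hv Hp.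
by exists q; rewrite -(arr_subT _ p).
Qed.

Lemma clique_path (T : finType) (e : rel T) (x : T) s :
  (forall x y, x != y -> e x y) -> uniq (x :: s) -> path e x s.
Proof.
move=> He; elim: s x => [|y s IH] x //= /andP [xys /andP [ys Us]].
have xy : x != y by apply/eqP => E; rewrite E mem_head in xys.
by rewrite He // IH //= ys Us.
Qed.

Lemma clique_HCE (T : finType) (e : rel T) (P : pred T) :
  (forall x y, x != y -> e x y) -> (forall x y, ~~ P x -> ~~ P y -> x = y) -> 3 < #|T| ->
  HCE e setT (fun x y => P x && P y).
Proof.
move=> He Hb HT u v _ _ uv.
have key : forall pre, uniq pre -> u \notin pre -> v \notin pre ->
  ham_path e setT u v (pre ++ [seq x <- enum T | x \notin u :: v :: pre] ++ [:: v]).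
  move=> pre Up up vp; set rest := [seq x <- enum T | _].
  have pe : perm_eq (u :: pre ++ rest ++ [:: v]) ((u :: v :: pre) ++ rest).
    by rewrite /= perm_cons catA perm_catC.
  have U : uniq (u :: pre ++ rest ++ [:: v]).
    rewrite (perm_uniq pe) cat_uniq filter_uniq ?enum_uniq // andbT.
    have -> : uniq [:: u, v & pre] by rewrite /= inE negb_or uv up vp Up.
    by apply/hasPn => z; rewrite mem_filter => /andP [].
  split => //.
  - apply/setP => z; rewrite in_setT in_set (perm_mem pe) mem_cat mem_filter mem_enum andbT.
    by case: (z \in u :: v :: pre).
  - by apply: clique_path.
  - by rewrite catA cats1 last_rcons.
have /card_gt1P [g1 [g2 [G1 G2 g12]]] : 1 < #|[set x | (x != u) && (x != v)]|.
  have : #|T| = #|[set x | (x != u) && (x != v)]|.+2.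
    rewrite -cardsT (cardsD1 u) (cardsD1 v) !inE eq_sym uv /= add1n add1n.
    by congr (_.+2); apply: eq_card => z; rewrite !inE andbT andbC.
  by move=> E; rewrite E in HT.
move: G1 G2; rewrite !inE => /andP [g1u g1v] /andP [g2u g2v].
case: (boolP (P u)) => Pu.
  have [g [Pg gu gv]] : exists g, [/\ P g, g != u & g != v].
    case: (boolP (P g1)) => P1; first by exists g1.
    case: (boolP (P g2)) => P2; first by exists g2.
    by rewrite (Hb _ _ P1 P2) eqxx in g12.
  exists (g :: [seq x <- enum T | x \notin u :: v :: [:: g]] ++ [:: v]); split.
    by apply: (key [:: g]) => //; rewrite inE eq_sym.
  by exists [::], ([seq x <- enum T | x \notin u :: v :: [:: g]] ++ [:: v]), u, g; rewrite Pu Pg.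
have P1 : P g1 by apply: contraR g1u => P1; rewrite (Hb _ _ P1 Pu).
have P2 : P g2 by apply: contraR g2u => P2; rewrite (Hb _ _ P2 Pu).
exists (g1 :: g2 :: [seq x <- enum T | x \notin u :: v :: [:: g1; g2]] ++ [:: v]); split.
  apply: (key [:: g1; g2]) => //=; rewrite ?inE ?negb_or ?g12 //.
    by rewrite eq_sym g1u eq_sym g2u.
  by rewrite eq_sym g1v eq_sym g2v.
by exists [:: u], ([seq x <- enum T | x \notin u :: v :: [:: g1; g2]] ++ [:: v]), g1, g2; rewrite P1 P2.
Qed.

Lemma card_arr n k : #|[set: arr_vertex n k]| = n ^_ k.
Proof.
rewrite -(card_imset _ val_inj) -[n in n ^_ _]card_ord.
have -> : #|'I_n| = #|predT : pred 'I_n| by apply: eq_card.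
rewrite -card_uniq_tuples; apply: eq_card => t; rewrite !inE.
apply/imsetP/andP => [[x _ ->]|[_ U]]; first by split; [apply/allP|exact: (valP x)].
by exists (exist _ t U).
Qed.

Lemma F1 n : 4 <= n -> Fprop n 1.
Proof.
move=> hn b; apply: (clique_HCE (P := fun x : arr_vertex n 1 => b \notin val x)).
- move=> x y xy; have [p Hp] := neq_pos xy; rewrite /arr_adj.
  rewrite (_ : [set _ | _] = [set p]) ?cards1 //; apply/setP => q; rewrite !inE.
  by rewrite (ord1 q) (ord1 p) in Hp *; rewrite Hp eqxx.
- move=> x y; rewrite !negbK => /tnthP [p Ep] /tnthP [q Eq].
  apply/val_inj/eq_from_tnth => r.
  by rewrite (ord1 r) -(ord1 p) -Ep (ord1 p) -(ord1 q) -Eq.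
- by rewrite -cardsT card_arr ffactn1.
Qed.

Lemma Fall k : forall n, 0 < k -> k + 2 <= n -> 4 <= n -> Fprop n k.
Proof.
elim: k => [//|k IH] n _ hnk hn.
case: k IH hnk => [|k] IH hnk; first exact: F1.
case: n hnk hn => [//|n] hnk hn.
case: (ltnP n 4) => h4.
  have [-> ->] : n = 3 /\ k = 0 by lia.
  by move=> b; apply: F42.
by apply: Fstep; try lia; apply: IH; lia.
Qed.

Theorem lemma4 (n k : nat) (i : 'I_k) (I : {set 'I_n}) :
  5 <= n -> 2 <= k -> 2 <= n - k -> I != set0 ->
  ham_connected (@arr_adj n k) (arr_sub i I).
Proof.
case: n I => [//|n] I; case: k i => [[]//|k] i hn hk hnk.
have FF : Fprop n k by apply: Fall; lia.
have hk' : 0 < k by lia.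
have hnk' : k + 2 <= n by lia.
have hn' : 4 <= n by lia.
suff main : forall m (I : {set 'I_n.+1}), #|I| <= m -> I != set0 ->
    ham_connected (@arr_adj n.+1 k.+1) (arr_sub i I) by apply: main.
elim=> [|m IH] {}I HI I0 u v Hu Hv uv.
  by move: I0; rewrite -card_gt0; case: #|I| HI.
case: (eqVneq (tnth (val u) i) (tnth (val v) i)) => [E|N]; last first.
  by have [p [Hp _]] := caseA hk' hnk' hn' FF (tnth (val u) i) Hu Hv N; exists p.
set a := tnth (val u) i in E.
have aI : a \in I by move: Hu; rewrite inE.
case: (eqVneq I [set a]) => [Ia|Ia].
  have E2 : arr_sub i I = Blk i a by apply/setP => w; rewrite Ia !inE.
  rewrite E2 in Hu Hv *; exact: (@blk_HC n k i hn' FF a u v Hu Hv uv).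
have /set0Pn [b Hb] : I :\ a != set0.
  apply: contraNneq Ia => E0; apply/eqP/setP => w; rewrite inE.
  apply/idP/idP => [wI|/eqP -> //]; apply: contraT => wa.
  have : w \in I :\ a by rewrite !inE wa wI.
  by rewrite E0 inE.
have ba : b != a by move: Hb; rewrite !inE => /andP [].
have uX : u \in Blk i a by rewrite inE.
have vX : v \in Blk i a by rewrite inE E.
have [p [Hp [s1 [s2 [x [y [Hs /andP [bx byy]]]]]]]] :=
  @blk_HCE n k i hn' FF a b ba u v uX vX uv.
have [U Eset P L] := Hp.
have xX : x \in Blk i a by rewrite -Eset inE Hs mem_cat !inE eqxx orbT.
have yX : y \in Blk i a by rewrite -Eset inE Hs mem_cat !inE eqxx !orbT.
have exy : arr_adj x y.
  have : sorted (@arr_adj n.+1 k.+1) (s1 ++ x :: y :: s2) by rewrite -Hs.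
  by rewrite sorted_cat_cons /= => /andP [_ /andP []].
set x' := updV x i b; set y' := updV y i b.
have HR : #|I :\ a| <= m.
  by move: HI; rewrite (cardsD1 a I) aI add1n ltnS.
have R0 : I :\ a != set0 by apply/set0Pn; exists b.
have x'R : x' \in arr_sub i (I :\ a) by rewrite inE tnth_updV // eqxx.
have y'R : y' \in arr_sub i (I :\ a) by rewrite inE tnth_updV // eqxx.
have x'y' : x' != y'.
  apply: contraTneq exy => Exy.
  suff -> : x = y by apply/negP => /arr_adj_neq; rewrite eqxx.
  apply: val_inj.
  have tx : tnth (val x) i = a by move: xX; rewrite inE => /eqP.
  have ty : tnth (val y) i = a by move: yX; rewrite inE => /eqP.
  rewrite -(upd_upd (val x) i b) -(upd_upd (val y) i b) tx ty.
  rewrite -[upd (val x) i b]updV_val // -[upd (val y) i b]updV_val //.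
  by rewrite -/x' -/y' Exy.
have [q Hq] := IH (I :\ a) HR R0 x' y' x'R y'R x'y'.
have D : [disjoint Blk i a & arr_sub i (I :\ a)].
  rewrite -setI_eq0; apply/eqP/setP => w; rewrite !inE.
  by apply/negbTE/andP => [[/eqP -> /andP [/negP]]].
have ey : arr_adj y' y by rewrite arr_adjC; apply: adj_updV.
have [p' Hp'] := splice Hp Hs Hq D (@adj_updV _ _ x i b bx) ey.
exists p'; suff <- : Blk i a :|: arr_sub i (I :\ a) = arr_sub i I by [].
apply/setP => w; rewrite !inE; case: eqP => [->|] //=.
Qed.
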